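(* Let $A\in\mathbb{R}^{m\times n}$, $b\in\mathbb{R}^m$, $f(x)=\frac12\|Ax-b\|^2=\frac12x^tQx-x^tc+\frac12b^tb$ with $Q=A^tA$, $c=A^tb$. Suppose IMRO-2D is applied to minimizing $f$ from a starting point $x^0$. Then the sequence of iterates generated by IMRO-2D is the same as the sequence of iterates generated by the linear conjugate gradient method for minimizing $\frac12x^tQx-x^tc$ started at $x^0$.
   Context: IMRO-2D applied to $f$ (with no $\ell_1$ term) is the following iteration. Let $r^0=\nabla f(x^0)=Qx^0-c$, $\sigma_0=\frac{(r^0)^tQr^0}{(r^0)^tr^0}$ and $x^1=x^0-\frac{1}{\sigma_0}r^0$. For $k\ge1$, with $r^k=\nabla f(x^k)$ and $d^k=x^k-x^{k-1}$, one chooses a scalar $\sigma_k$ and a vector $u_k\in\mathrm{span}\{r^k,d^k\}$ such that $H_k=\sigma_k\mathbf I-u_ku_k^t$ is positive definite and $w^tH_kw=w^tQw$ for all $w\in\mathrm{span}\{r^k,d^k\}$ (i.e. the quadratic model $f(x^k)+\langle\nabla f(x^k),x-x^k\rangle+\frac12(x-x^k)^tH_k(x-x^k)$ coincides with $f$ on $x^k+\mathrm{span}\{r^k,d^k\}$), and sets $x^{k+1}=x^k-H_k^{-1}r^k$, the minimizer of that quadratic model. The statement concerns iterates for which this construction is well defined. The linear conjugate gradient method is the standard one: $p^0=-r^0$, $\alpha_k=\frac{(r^k)^tr^k}{(p^k)^tQp^k}$, $x^{k+1}=x^k+\alpha_kp^k$, $r^{k+1}=r^k+\alpha_kQp^k$,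 $p^{k+1}=-r^{k+1}+\frac{(r^{k+1})^tr^{k+1}}{(r^k)^tr^k}p^k$. *)

(* Defs.v *)
From HB Require Import structures.
From mathcomp Require Import all_boot all_order all_algebra.
From mathcomp Require Import reals.
Set Implicit Arguments. Unset Strict Implicit. Unset Printing Implicit Defensive.
Import Order.TTheory GRing.Theory Num.Theory.
Local Open Scope ring_scope.

Section Defs.
Variables (R : realType) (n : nat).

Definition dotv (u v : 'cV[R]_n) : R := (u^T *m v) 0 0.

(* gradient of 1/2 x^t Q x - x^t c *)
Definition grad (Q : 'M[R]_n) (c : 'cV[R]_n) (x : 'cV[R]_n) : 'cV[R]_n :=
  Q *m x - c.

Definition imro_H (sigma : R) (u : 'cV[R]_n) : 'M[R]_n :=
  sigma%:M - u *m u^T.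

Definition imro_first_step (Q : 'M[R]_n) (c x0 x1 : 'cV[R]_n) : Prop :=
  let r0 := grad Q c x0 in
  let sigma0 := dotv r0 (Q *m r0) / dotv r0 r0 in
  x1 = x0 - (1 / sigma0) *: r0.

Definition imro_step (Q : 'M[R]_n) (c xprev xk : 'cV[R]_n)
    (sigma : R) (u xnext : 'cV[R]_n) : Prop :=
  let r := grad Q c xk in
  let d := xk - xprev in
  let H := imro_H sigma u in
  [/\ exists a b : R, u = a *: r + b *: d,
      (forall w : 'cV[R]_n, w != 0 -> 0 < dotv w (H *m w)),
      (forall a b : R, let w := a *: r + b *: d in
         dotv w (H *m w) = dotv w (Q *m w))
    & xnext = xk - invmx H *m r].

Fixpoint cg_state (Q : 'M[R]_n) (c x0 : 'cV[R]_n) (k : nat)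
    : 'cV[R]_n * 'cV[R]_n * 'cV[R]_n :=
  match k with
  | 0 => let r0 := Q *m x0 - c in (x0, r0, - r0)
  | k'.+1 =>
      let '(x, r, p) := cg_state Q c x0 k' in
      let alpha := dotv r r / dotv p (Q *m p) in
      let x' := x + alpha *: p in
      let r' := r + alpha *: (Q *m p) in
      let beta := dotv r' r' / dotv r r in
      (x', r', - r' + beta *: p)
  end.

Definition cg_iter (Q : 'M[R]_n) (c x0 : 'cV[R]_n) (k : nat) : 'cV[R]_n :=
  (cg_state Q c x0 k).1.1.

End Defs.

(* Main.v *)
Require Import Defs.
From HB Require Import structures.
From mathcomp Require Import all_boot all_order all_algebra.
From mathcomp Require Import reals ring lra.
Import Order.TTheory GRing.Theory Num.Theory.
Local Open Scope ring_scope.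

Section Dot.
Variables (R : realType) (n : nat).
Implicit Types (u v w : 'cV[R]_n) (M : 'M[R]_n).

Lemma dotvE u v : dotv u v = \sum_i u i 0 * v i 0.
Proof. by rewrite /dotv !mxE; apply: eq_bigr => i _; rewrite mxE. Qed.

Lemma dotvC u v : dotv u v = dotv v u.
Proof. by rewrite !dotvE; apply: eq_bigr => i _; rewrite mulrC. Qed.

Lemma dotvDr u v w : dotv u (v + w) = dotv u v + dotv u w.
Proof. by rewrite !dotvE -big_split; apply: eq_bigr => i _; rewrite !mxE mulrDr. Qed.

Lemma dotvZr a u v : dotv u (a *: v) = a * dotv u v.
Proof. by rewrite !dotvE mulr_sumr; apply: eq_bigr => i _; rewrite !mxE mulrCA. Qed.

Lemma dotvNr u v : dotv u (- v) = - dotv u v.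
Proof. by rewrite -scaleN1r dotvZr mulN1r. Qed.

Lemma dotvBr u v w : dotv u (v - w) = dotv u v - dotv u w.
Proof. by rewrite dotvDr dotvNr. Qed.

Lemma dotvDl u v w : dotv (v + w) u = dotv v u + dotv w u.
Proof. by rewrite !(dotvC _ u) dotvDr. Qed.

Lemma dotvZl a u v : dotv (a *: v) u = a * dotv v u.
Proof. by rewrite !(dotvC _ u) dotvZr. Qed.

Lemma dotvNl u v : dotv (- v) u = - dotv v u.
Proof. by rewrite !(dotvC _ u) dotvNr. Qed.

Lemma dotvBl u v w : dotv (v - w) u = dotv v u - dotv w u.
Proof. by rewrite dotvDl dotvNl. Qed.

Lemma dotv0r u : dotv u 0 = 0.
Proof. by rewrite dotvE big1 // => i _; rewrite mxE mulr0. Qed.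

Lemma dotv0l u : dotv 0 u = 0.
Proof. by rewrite dotvC dotv0r. Qed.

Lemma dotv_ge0 u : 0 <= dotv u u.
Proof. by rewrite dotvE; apply: sumr_ge0 => i _; rewrite -expr2 sqr_ge0. Qed.

Lemma dotv_eq0 u : dotv u u = 0 -> u = 0.
Proof.
rewrite dotvE => /eqP; rewrite psumr_eq0; last by move=> i _; rewrite -expr2 sqr_ge0.
move=> /allP H; apply/matrixP => i j; rewrite ord1 mxE.
have /H : i \in index_enum 'I_n by rewrite mem_index_enum.
by rewrite /= mulf_eq0 orbb => /eqP.
Qed.

End Dot.

Lemma dotv_mulmx (R : realType) (m n : nat) (M : 'M[R]_(m, n)) u v :
  dotv u (M *m v) = dotv (M^T *m u) v.
Proof. by rewrite /dotv trmx_mul trmxK mulmxA. Qed.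

Section Imro.
Variables (R : realType) (n : nat).
Implicit Types (u v w r d t : 'cV[R]_n) (M Q H : 'M[R]_n).

Lemma dotv_sym M w v : M^T = M -> dotv w (M *m v) = dotv v (M *m w).
Proof. by move=> HM; rewrite dotv_mulmx HM dotvC. Qed.

Lemma quad_expand M w v : M^T = M ->
  dotv (w + v) (M *m (w + v)) = dotv w (M *m w) + dotv v (M *m v) + 2 * dotv w (M *m v).
Proof.
move=> HM; rewrite mulmxDr !dotvDl !dotvDr (dotv_sym _ v w HM); lra.
Qed.

Lemma H_sym sigma u : (imro_H sigma u)^T = imro_H sigma u.
Proof. by rewrite /imro_H linearB /= tr_scalar_mx trmx_mul trmxK. Qed.

Lemma H_mul sigma u t : imro_H sigma u *m t = sigma *: t - dotv u t *: u.
Proof.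
rewrite /imro_H mulmxBl mul_scalar_mx -mulmxA; congr (_ - _).
apply/matrixP => i j; rewrite !mxE big_ord1 (ord1 j) /dotv mulrC.
by [].
Qed.

Lemma posdef_unit H : H^T = H -> (forall w, w != 0 -> 0 < dotv w (H *m w)) ->
  H \in unitmx.
Proof.
move=> Hs Hpd; rewrite -row_free_unit -kermx_eq0; apply/eqP/row_matrixP => i.
rewrite row0; set z := row i (kermx H).
have hz : z *m H = 0 by rewrite /z -row_mul mulmx_ker row0.
have hw : H *m z^T = 0 by rewrite -{1}Hs -trmx_mul hz trmx0.
case: (eqVneq z^T 0) => [/(congr1 trmx)|hne]; first by rewrite trmxK trmx0.
by have := Hpd _ hne; rewrite hw dotv0r ltxx.
Qed.

Lemma imro_key Q r d sigma u t :
  Q^T = Q ->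
  (exists a b : R, u = a *: r + b *: d) ->
  (forall w, w != 0 -> 0 < dotv w (imro_H sigma u *m w)) ->
  (forall a b : R, let w := a *: r + b *: d in
         dotv w (imro_H sigma u *m w) = dotv w (Q *m w)) ->
  (exists a b : R, t = a *: r + b *: d) ->
  dotv r (Q *m t) = - dotv r r -> dotv d (Q *m t) = - dotv d r ->
  invmx (imro_H sigma u) *m r = - t.
Proof.
move=> HQ [a [b hu]] Hpd Hag [a' [b' ht]] hr hd.
set H := imro_H sigma u.
have pol : forall a1 b1 a2 b2,
   dotv (a1 *: r + b1 *: d) (H *m (a2 *: r + b2 *: d)) =
   dotv (a1 *: r + b1 *: d) (Q *m (a2 *: r + b2 *: d)).
  move=> a1 b1 a2 b2.
  have e : (a1 *: r + b1 *: d) + (a2 *: r + b2 *: d) = (a1 + a2) *: r + (b1 + b2) *: d.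
    by rewrite !scalerDl addrACA.
  have h1 := Hag (a1 + a2) (b1 + b2); rewrite /= -e in h1.
  rewrite (quad_expand _ _ _ (H_sym _ _)) (quad_expand _ _ _ HQ) Hag (Hag a2 b2) in h1.
  lra.
have er : r = 1 *: r + 0 *: d by rewrite scale1r scale0r addr0.
have ed : d = 0 *: r + 1 *: d by rewrite scale1r scale0r add0r.
have hrt : dotv r (H *m t) = dotv r (Q *m t) by rewrite er ht pol.
have hdt : dotv d (H *m t) = dotv d (Q *m t) by rewrite ed ht pol.
set v := H *m t + r.
have vr : dotv v r = 0 by rewrite dotvC dotvDr hrt hr addNr.
have vd : dotv v d = 0 by rewrite dotvC dotvDr hdt hd dotvC addNr.
have vS : forall a1 b1, dotv v (a1 *: r + b1 *: d) = 0.
  by move=> a1 b1; rewrite dotvDr !dotvZr vr vd !mulr0 addr0.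
have v0 : v = 0.
  apply: dotv_eq0; rewrite {2}/v dotvDr vr addr0 H_mul dotvBr !dotvZr.
  by rewrite {2}hu ht !vS !mulr0 subrr.
have Ht : H *m (- t) = r by rewrite mulmxN; apply/eqP; rewrite eq_sym -subr_eq0 opprK addrC -/v v0.
rewrite -Ht mulKmx //; apply: posdef_unit => //; exact: H_sym.
Qed.

End Imro.

Section CG.
Variables (R : realType) (m n : nat) (A : 'M[R]_(m, n)) (b : 'cV[R]_m) (x0 : 'cV[R]_n).
Local Notation Q := (A^T *m A).
Local Notation c := (A^T *m b).

Definition st k := cg_state Q c x0 k.
Definition X k := (st k).1.1.
Definition rr k := (st k).1.2.
Definition pp k := (st k).2.
Definition al k := dotv (rr k) (rr k) / dotv (pp k) (Q *m pp k).
Definition be k := dotv (rr k.+1) (rr k.+1) / dotv (rr k) (rr k).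

Lemma X0 : X 0 = x0. Proof. by []. Qed.
Lemma r0 : rr 0 = Q *m x0 - c. Proof. by []. Qed.
Lemma p0 : pp 0 = - rr 0. Proof. by []. Qed.

Lemma XS k : X k.+1 = X k + al k *: pp k.
Proof. by rewrite /X /al /rr /pp /st /=; case: (cg_state _ _ _ k) => [[? ?] ?]. Qed.
Lemma rS k : rr k.+1 = rr k + al k *: (Q *m pp k).
Proof. by rewrite /X /al /rr /pp /st /=; case: (cg_state _ _ _ k) => [[? ?] ?]. Qed.
Lemma pS k : pp k.+1 = - rr k.+1 + be k *: pp k.
Proof. by rewrite /be /rr /pp /st /=; case: (cg_state _ _ _ k) => [[? ?] ?]. Qed.

Lemma QT : Q^T = Q. Proof. by rewrite trmx_mul trmxK. Qed.

Lemma F0 k : rr k = Q *m X k - c.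
Proof.
elim: k => [//|k IH]; by rewrite rS XS IH mulmxDr -scalemxAr addrAC.
Qed.

Lemma prange k : exists z, pp k = A^T *m z.
Proof.
elim: k => [|k [z hz]].
  by exists (- (A *m x0 - b)); rewrite p0 r0 mulmxN mulmxBr mulmxA.
exists (- (A *m X k.+1 - b) + be k *: z).
by rewrite pS F0 mulmxDr mulmxN mulmxBr mulmxA hz scalemxAr.
Qed.

Lemma pQp_ge0 k : 0 <= dotv (pp k) (Q *m pp k).
Proof. rewrite -mulmxA dotv_mulmx trmxK; exact: dotv_ge0. Qed.

Lemma pQp0 k : dotv (pp k) (Q *m pp k) = 0 -> pp k = 0.
Proof.
rewrite -mulmxA dotv_mulmx trmxK => /dotv_eq0 hA.
have [z hz] := prange k.
apply: dotv_eq0; rewrite {1}hz dotvC dotv_mulmx trmxK.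
by rewrite hA dotv0l.
Qed.

Definition Inv k := dotv (rr k) (pp k) = - dotv (rr k) (rr k) /\
   dotv (pp k) (Q *m rr k) = - dotv (pp k) (Q *m pp k).

Lemma Qsym u v : dotv u (Q *m v) = dotv v (Q *m u).
Proof. exact: dotv_sym QT. Qed.

Lemma degen k : Inv k -> dotv (pp k) (Q *m pp k) = 0 ->
  pp k = 0 /\ rr k = 0.
Proof.
move=> [h1 _] /pQp0 hp; split => //; apply: dotv_eq0.
by apply/eqP; rewrite -oppr_eq0 -h1 hp dotv0r.
Qed.

Lemma F3 k : Inv k -> dotv (rr k.+1) (rr k) = 0.
Proof.
move=> I; have [h1 h2] := I.
case: (eqVneq (dotv (pp k) (Q *m pp k)) 0) => [/(degen _ I) [_ ->]|hne].
  by rewrite dotv0r.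
rewrite rS dotvDl dotvZl dotvC Qsym h2 /al; field.
exact: hne.
Qed.

Lemma F5 k : Inv k -> dotv (rr k.+1) (pp k) = 0.
Proof.
move=> I; have [h1 h2] := I.
case: (eqVneq (dotv (pp k) (Q *m pp k)) 0) => [/(degen _ I) [-> _]|hne].
  by rewrite dotv0r.
rewrite rS dotvDl dotvZl h1 (@dotvC _ _ (Q *m pp k)) /al; field; exact: hne.
Qed.

Lemma F4 k : Inv k -> dotv (pp k.+1) (Q *m pp k) = 0.
Proof.
move=> I; have [h1 h2] := I.
case: (eqVneq (dotv (pp k) (Q *m pp k)) 0) => [/(degen _ I) [-> _]|hne].
  by rewrite mulmx0 dotv0r.
case: (eqVneq (dotv (rr k) (rr k)) 0) => [hr0|hrne].
  have ha : al k = 0 by rewrite /al hr0 mul0r.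
  have hb : be k = 0 by rewrite /be hr0 invr0 mulr0.
  have er : rr k.+1 = 0 by rewrite rS ha scale0r addr0; apply: dotv_eq0.
  by rewrite pS hb scale0r addr0 er oppr0 dotv0l.
have e : dotv (rr k.+1) (rr k.+1) = al k * dotv (rr k.+1) (Q *m pp k).
  by rewrite {2}rS dotvDr dotvZr F3 // add0r.
rewrite pS dotvDl dotvNl dotvZl /be e /al; field.
by apply/andP; split.
Qed.

Lemma Inv_all k : Inv k.
Proof.
elim: k => [|k I].
  split; rewrite p0 ?dotvNr //.
  by rewrite !mulmxN !dotvNl !dotvNr opprK.
split.
  by rewrite pS dotvDr dotvNr dotvZr F5 // mulr0 addr0.
have e : dotv (pp k.+1) (Q *m pp k.+1) = - dotv (pp k.+1) (Q *m rr k.+1).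
  by rewrite {2}(pS k) mulmxDr mulmxN dotvDr dotvNr -scalemxAr dotvZr F4 // mulr0 addr0.
by rewrite e opprK.
Qed.

Lemma X_diff k : X k.+1 - X k = al k *: pp k.
Proof. by rewrite XS addrC addKr. Qed.

Lemma Qt k : Q *m (al k.+1 *: pp k.+1) = rr k.+2 - rr k.+1.
Proof. by rewrite (rS k.+1) addrC addKr scalemxAr. Qed.

Lemma span_t k : exists a b0 : R,
  al k.+1 *: pp k.+1 = a *: rr k.+1 + b0 *: (X k.+1 - X k).
Proof.
rewrite X_diff (pS k).
case: (eqVneq (al k) 0) => [ha|hne].
  have : dotv (rr k) (rr k) = 0.
    move/eqP: ha; rewrite /al mulf_eq0 invr_eq0 => /orP [/eqP //|/eqP h].
    by have [_ ->] := degen _ (Inv_all k) h; rewrite dotv0r.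
  move=> hr0; have hb : be k = 0 by rewrite /be hr0 invr0 mulr0.
  exists (- al k.+1), 0.
  by rewrite hb !scale0r !addr0 scalerN scaleNr.
exists (- al k.+1), (al k.+1 * be k / al k).
by rewrite scalerA divfK // scalerDr scalerN scaleNr scalerA.
Qed.

Lemma orth_r k : dotv (rr k.+1) (Q *m (al k.+1 *: pp k.+1)) = - dotv (rr k.+1) (rr k.+1).
Proof. rewrite Qt dotvBr dotvC F3 ?sub0r //; exact: Inv_all. Qed.

Lemma orth_d k : dotv (X k.+1 - X k) (Q *m (al k.+1 *: pp k.+1)) =
   - dotv (X k.+1 - X k) (rr k.+1).
Proof.
have h5 : dotv (pp k) (rr k.+1) = 0 by rewrite dotvC F5 //; exact: Inv_all.
have h4 : dotv (pp k.+1) (Q *m pp k) = 0 by apply: F4; exact: Inv_all.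
rewrite X_diff Qt dotvBr !dotvZl h5 (rS k.+1) dotvDr h5 dotvZr Qsym h4.
by rewrite !mulr0 add0r mulr0 subr0 oppr0.
Qed.

End CG.

Theorem theorem1 (R : realType) (m n : nat) (A : 'M[R]_(m, n)) (b : 'cV[R]_m)
    (x : nat -> 'cV[R]_n) (sigma : nat -> R) (u : nat -> 'cV[R]_n) :
  let Q := A^T *m A in
  let c := A^T *m b in
  imro_first_step Q c (x 0%N) (x 1%N) ->
  (forall k : nat, (0 < k)%N ->
     imro_step Q c (x k.-1) (x k) (sigma k) (u k) (x k.+1)) ->
  forall k : nat, x k = cg_iter Q c (x 0%N) k.
Proof.
move=> Q c h1 hst.
suff H : forall k, x k = @X _ _ _ A b (x 0%N) k /\ x k.+1 = @X _ _ _ A b (x 0%N) k.+1.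
  by move=> k; case: (H k).
elim=> [|k [IH1 IH2]].
  split; first by [].
  rewrite h1 XS X0 p0 r0 /al p0 r0 /grad /Q /c !mulmxN dotvNl !dotvNr opprK.
  by rewrite div1r invf_div scalerN.
split => //.
have := hst k.+1 isT; rewrite /imro_step /= => -[hu hpd hag hx].
rewrite IH1 IH2 /grad /Q /c -F0 in hu hag hx.
rewrite hx (imro_key _ _ _ _ _ _ _ _ (@QT _ _ _ A) hu hpd hag (span_t _ _ _ _ _ _ k)).
- by rewrite opprK -XS.
- exact: orth_r.
- exact: orth_d.
Qed.
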